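(* Let $L : \mathcal M \rightleftarrows \mathcal N : U$ be a Quillen pair between model categories such that (a) $U$ creates weak equivalences (a map $f$ in $\mathcal N$ is a weak equivalence if and only if $Uf$ is), and (b) for every cofibrant object $X$ of $\mathcal M$ that is weakly equivalent to an object in the image of $U$, the unit $X \to ULX$ is a weak equivalence. Suppose moreover there exists a left Bousfield localization $\mathcal M'$ of $\mathcal M$ whose fibrant objects are exactly the fibrant objects of $\mathcal M$ that are weakly equivalent to an object in the image of $U$. Then $L : \mathcal M' \rightleftarrows \mathcal N : U$ is a Quillen equivalence.
   Context: A left Bousfield localization of a model category $\mathcal M$ is a model structure on the same underlying category with the same cofibrations and a class of weak equivalences containing those of $\mathcal M$. *)

(* Defs.v *)
From Stdlib Require Import Relations Relation_Operators.

Record Category := {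
  Ob :> Type;
  Hom : Ob -> Ob -> Type;
  idm : forall a, Hom a a;
  comp : forall a b c, Hom b c -> Hom a b -> Hom a c;
  comp_idl : forall a b (f : Hom a b), comp a b b (idm b) f = f;
  comp_idr : forall a b (f : Hom a b), comp a a b f (idm a) = f;
  comp_assoc : forall a b c d (h : Hom c d) (g : Hom b c) (f : Hom a b),
      comp a c d h (comp a b c g f) = comp a b d (comp b c d h g) f
}.
Arguments Hom {C} : rename.
Arguments idm {C} : rename.
Arguments comp {C a b c} : rename.

Record Functor (C D : Category) := {
  fobj :> C -> D;
  fmap : forall a b, Hom a b -> Hom (fobj a) (fobj b);
  fmap_id : forall a, fmap a a (idm a) = idm (fobj a);
  fmap_comp : forall a b c (g : Hom b c) (f : Hom a b),
      fmap a c (comp g f) = comp (fmap b c g) (fmap a b f)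
}.
Arguments fobj {C D}.
Arguments fmap {C D} f {a b} : rename.

Record Adjunction {C D : Category} (L : Functor C D) (U : Functor D C) := {
  adj_unit : forall X : C, Hom X (U (L X));
  adj_counit : forall Y : D, Hom (L (U Y)) Y;
  adj_unit_nat : forall X X' (f : Hom X X'),
      comp (adj_unit X') f = comp (fmap U (fmap L f)) (adj_unit X);
  adj_counit_nat : forall Y Y' (g : Hom Y Y'),
      comp g (adj_counit Y) = comp (adj_counit Y') (fmap L (fmap U g));
  adj_triangle_L : forall X,
      comp (adj_counit (L X)) (fmap L (adj_unit X)) = idm (L X);
  adj_triangle_U : forall Y,
      comp (fmap U (adj_counit Y)) (adj_unit (U Y)) = idm (U Y)
}.
Arguments adj_unit {C D L U}.
Arguments adj_counit {C D L U}.

Definition adjunct {C D : Category} {L : Functor C D} {U : Functor D C}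
  (A : Adjunction L U) {X : C} {Y : D} (f : Hom (L X) Y) : Hom X (U Y) :=
  comp (fmap U f) (adj_unit A X).

Definition MorClass (C : Category) := forall a b : C, Hom a b -> Prop.

Definition is_terminal {C : Category} (t : C) : Prop :=
  forall a : C, exists f : Hom a t, forall g : Hom a t, g = f.
Definition is_initial {C : Category} (i : C) : Prop :=
  forall a : C, exists f : Hom i a, forall g : Hom i a, g = f.

Definition is_pullback {C : Category} {a b c p : C}
  (f : Hom a c) (g : Hom b c) (p1 : Hom p a) (p2 : Hom p b) : Prop :=
  comp f p1 = comp g p2 /\
  forall (q : C) (q1 : Hom q a) (q2 : Hom q b), comp f q1 = comp g q2 ->
    exists h : Hom q p, comp p1 h = q1 /\ comp p2 h = q2 /\
      forall h' : Hom q p, comp p1 h' = q1 -> comp p2 h' = q2 -> h' = h.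

Definition is_pushout {C : Category} {a b c p : C}
  (f : Hom c a) (g : Hom c b) (i1 : Hom a p) (i2 : Hom b p) : Prop :=
  comp i1 f = comp i2 g /\
  forall (q : C) (q1 : Hom a q) (q2 : Hom b q), comp q1 f = comp q2 g ->
    exists h : Hom p q, comp h i1 = q1 /\ comp h i2 = q2 /\
      forall h' : Hom p q, comp h' i1 = q1 -> comp h' i2 = q2 -> h' = h.

(* terminal object + pullbacks = all finite limits; dually for colimits *)
Definition has_finite_limits (C : Category) : Prop :=
  (exists t : C, is_terminal t) /\
  forall (a b c : C) (f : Hom a c) (g : Hom b c),
    exists (p : C) (p1 : Hom p a) (p2 : Hom p b), is_pullback f g p1 p2.

Definition has_finite_colimits (C : Category) : Prop :=
  (exists i : C, is_initial i) /\
  forall (a b c : C) (f : Hom c a) (g : Hom c b),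
    exists (p : C) (i1 : Hom a p) (i2 : Hom b p), is_pushout f g i1 i2.

Definition is_retract_of {C : Category} {a b c d : C}
  (f : Hom a b) (g : Hom c d) : Prop :=
  exists (i : Hom a c) (r : Hom c a) (j : Hom b d) (s : Hom d b),
    comp r i = idm a /\ comp s j = idm b /\
    comp g i = comp j f /\ comp f r = comp s g.

Definition has_LLP {C : Category} {a b x y : C} (i : Hom a b) (p : Hom x y) : Prop :=
  forall (u : Hom a x) (v : Hom b y), comp p u = comp v i ->
    exists h : Hom b x, comp h i = u /\ comp p h = v.

Definition subcategory_class {C : Category} (P : MorClass C) : Prop :=
  (forall a, P a a (idm a)) /\
  (forall a b c (g : Hom b c) (f : Hom a b), P _ _ f -> P _ _ g -> P _ _ (comp g f)).

Definition retract_closed {C : Category} (P : MorClass C) : Prop :=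
  forall a b c d (f : Hom a b) (g : Hom c d), is_retract_of f g -> P _ _ g -> P _ _ f.

Definition inter {C : Category} (P Q : MorClass C) : MorClass C :=
  fun a b f => P a b f /\ Q a b f.

Record ModelStructure (C : Category) := {
  W : MorClass C;
  Cof : MorClass C;
  Fib : MorClass C;
  ms_limits : has_finite_limits C;
  ms_colimits : has_finite_colimits C;
  ms_W_sub : subcategory_class W;
  ms_Cof_sub : subcategory_class Cof;
  ms_Fib_sub : subcategory_class Fib;
  ms_2of3_gf : forall a b c (g : Hom b c) (f : Hom a b),
      W _ _ f -> W _ _ g -> W _ _ (comp g f);
  ms_2of3_f : forall a b c (g : Hom b c) (f : Hom a b),
      W _ _ g -> W _ _ (comp g f) -> W _ _ f;
  ms_2of3_g : forall a b c (g : Hom b c) (f : Hom a b),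
      W _ _ f -> W _ _ (comp g f) -> W _ _ g;
  ms_W_retract : retract_closed W;
  ms_Cof_retract : retract_closed Cof;
  ms_Fib_retract : retract_closed Fib;
  ms_lift_acof : forall a b x y (i : Hom a b) (p : Hom x y),
      Cof _ _ i -> W _ _ i -> Fib _ _ p -> has_LLP i p;
  ms_lift_afib : forall a b x y (i : Hom a b) (p : Hom x y),
      Cof _ _ i -> Fib _ _ p -> W _ _ p -> has_LLP i p;
  ms_fact_acof_fib : forall a b (f : Hom a b),
      exists (c : C) (i : Hom a c) (p : Hom c b),
        Cof _ _ i /\ W _ _ i /\ Fib _ _ p /\ comp p i = f;
  ms_fact_cof_afib : forall a b (f : Hom a b),
      exists (c : C) (i : Hom a c) (p : Hom c b),
        Cof _ _ i /\ Fib _ _ p /\ W _ _ p /\ comp p i = f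
}.
Arguments W {C} m {a b}.
Arguments Cof {C} m {a b}.
Arguments Fib {C} m {a b}.

Definition fibrant {C : Category} (M : ModelStructure C) (X : C) : Prop :=
  forall (t : C) (f : Hom X t), is_terminal t -> Fib M f.

Definition cofibrant {C : Category} (M : ModelStructure C) (X : C) : Prop :=
  forall (i : C) (f : Hom i X), is_initial i -> Cof M f.

Definition weakly_equivalent {C : Category} (M : ModelStructure C) : relation C :=
  clos_refl_sym_trans C (fun a b => exists f : Hom a b, W M f).

Definition left_Bousfield_localization {C : Category}
  (M' M : ModelStructure C) : Prop :=
  (forall a b (f : Hom a b), Cof M' f <-> Cof M f) /\
  (forall a b (f : Hom a b), W M f -> W M' f).

Definition QuillenPair {C D : Category} (M : ModelStructure C) (N : ModelStructure D)
  (L : Functor C D) (U : Functor D C) (A : Adjunction L U) : Prop :=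
  (forall a b (f : Hom a b), Cof M f -> Cof N (fmap L f)) /\
  (forall a b (f : Hom a b), Cof M f -> W M f -> W N (fmap L f)).

Definition QuillenEquivalence {C D : Category} (M : ModelStructure C)
  (N : ModelStructure D) (L : Functor C D) (U : Functor D C)
  (A : Adjunction L U) : Prop :=
  QuillenPair M N L U A /\
  forall (X : C) (Y : D) (f : Hom (L X) Y),
    cofibrant M X -> fibrant N Y -> (W N f <-> W M (adjunct A f)).

(* Main.v *)
Require Import Defs.
From Stdlib Require Import Relations Relation_Operators.

Lemma cA {C : Category} {a b c d : C} (h : Hom c d) (g : Hom b c) (f : Hom a b) :
  comp h (comp g f) = comp (comp h g) f.
Proof. apply comp_assoc. Qed.
Lemma cIl {C : Category} {a b : C} (f : Hom a b) : comp (idm b) f = f.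
Proof. apply comp_idl. Qed.
Lemma cIr {C : Category} {a b : C} (f : Hom a b) : comp f (idm a) = f.
Proof. apply comp_idr. Qed.
Lemma fC {C D : Category} (F : Functor C D) {a b c : C} (g : Hom b c) (f : Hom a b) :
  fmap F (comp g f) = comp (fmap F g) (fmap F f).
Proof. apply fmap_comp. Qed.
Lemma fI {C D : Category} (F : Functor C D) (a : C) : fmap F (idm a) = idm (F a).
Proof. apply fmap_id. Qed.

Lemma term_uniq {C : Category} (t : C) (Ht : is_terminal t) (a : C) (f g : Hom a t) : f = g.
Proof. destruct (Ht a) as [h Hh]. rewrite (Hh f), (Hh g). reflexivity. Qed.
Lemma init_uniq {C : Category} (t : C) (Ht : is_initial t) (a : C) (f g : Hom t a) : f = g.
Proof. destruct (Ht a) as [h Hh]. rewrite (Hh f), (Hh g). reflexivity. Qed.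

Lemma Wid {C} (M : ModelStructure C) (a : C) : W M (idm a).
Proof. apply (proj1 (ms_W_sub C M)). Qed.
Lemma Fid {C} (M : ModelStructure C) (a : C) : Fib M (idm a).
Proof. apply (proj1 (ms_Fib_sub C M)). Qed.
Lemma Fcomp {C} (M : ModelStructure C) {a b c : C} (g : Hom b c) (f : Hom a b) :
  Fib M f -> Fib M g -> Fib M (comp g f).
Proof. apply (proj2 (ms_Fib_sub C M)). Qed.
Lemma Ccomp {C} (M : ModelStructure C) {a b c : C} (g : Hom b c) (f : Hom a b) :
  Cof M f -> Cof M g -> Cof M (comp g f).
Proof. apply (proj2 (ms_Cof_sub C M)). Qed.
Lemma Wgf {C} (M : ModelStructure C) {a b c : C} (g : Hom b c) (f : Hom a b) :
  W M f -> W M g -> W M (comp g f).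
Proof. apply ms_2of3_gf. Qed.
Lemma Wf {C} (M : ModelStructure C) {a b c : C} (g : Hom b c) (f : Hom a b) :
  W M g -> W M (comp g f) -> W M f.
Proof. apply ms_2of3_f. Qed.
Lemma Wg {C} (M : ModelStructure C) {a b c : C} (g : Hom b c) (f : Hom a b) :
  W M f -> W M (comp g f) -> W M g.
Proof. apply ms_2of3_g. Qed.

Lemma iso_fib {C} (M : ModelStructure C) (t t' : C) (Ht : is_terminal t) (Ht' : is_terminal t')
  (phi : Hom t t') : Fib M phi.
Proof.
  destruct (Ht t') as [psi _].
  apply (ms_Fib_retract C M _ _ _ _ phi (idm t')).
  - exists phi, psi, (idm t'), (idm t'). repeat split.
    + apply term_uniq; assumption.
    + apply cIl.
    + rewrite cIl. apply term_uniq; assumption.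
  - apply Fid.
Qed.

Lemma fibrant_of {C} (M : ModelStructure C) (X t : C) (Ht : is_terminal t) (f : Hom X t) :
  Fib M f -> fibrant M X.
Proof.
  intros Hf t' g Ht'. destruct (Ht' t) as [phi _].
  rewrite (term_uniq t' Ht' _ g (comp phi f)). apply Fcomp; [assumption|].
  apply (iso_fib M t t'); assumption.
Qed.

Lemma llp_acof {C} (M : ModelStructure C) {a b : C} (i : Hom a b) :
  (forall x y (p : Hom x y), Fib M p -> has_LLP i p) -> Cof M i /\ W M i.
Proof.
  intros H. destruct (ms_fact_acof_fib C M a b i) as [c [j [p [Hj1 [Hj2 [Hp Hpj]]]]]].
  destruct (H _ _ p Hp j (idm b)) as [h [Hh1 Hh2]].
  { rewrite Hpj, cIl. reflexivity. }
  assert (R : is_retract_of i j).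
  { exists (idm a), (idm a), h, p. repeat split.
    - apply cIl.
    - exact Hh2.
    - rewrite cIr. symmetry. exact Hh1.
    - rewrite cIr. symmetry. exact Hpj. }
  split; [apply (ms_Cof_retract C M _ _ _ _ i j R Hj1) | apply (ms_W_retract C M _ _ _ _ i j R Hj2)].
Qed.

Lemma rlp_fib {C} (M : ModelStructure C) {x y : C} (p : Hom x y) :
  (forall a b (i : Hom a b), Cof M i -> W M i -> has_LLP i p) -> Fib M p.
Proof.
  intros H. destruct (ms_fact_acof_fib C M x y p) as [c [j [q [Hj1 [Hj2 [Hq Hqj]]]]]].
  destruct (H _ _ j Hj1 Hj2 (idm x) q) as [h [Hh1 Hh2]].
  { rewrite Hqj, cIr. reflexivity. }
  apply (ms_Fib_retract C M _ _ _ _ p q); [|exact Hq].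
  exists j, h, (idm y), (idm y). repeat split.
  - exact Hh1.
  - apply cIl.
  - rewrite cIl. exact Hqj.
  - rewrite cIl. exact Hh2.
Qed.

Lemma rlp_afib {C} (M : ModelStructure C) {x y : C} (p : Hom x y) :
  (forall a b (i : Hom a b), Cof M i -> has_LLP i p) -> Fib M p /\ W M p.
Proof.
  intros H. destruct (ms_fact_cof_afib C M x y p) as [c [j [q [Hj1 [Hq1 [Hq2 Hqj]]]]]].
  destruct (H _ _ j Hj1 (idm x) q) as [h [Hh1 Hh2]].
  { rewrite Hqj, cIr. reflexivity. }
  assert (R : is_retract_of p q).
  { exists j, h, (idm y), (idm y). repeat split.
    - exact Hh1.
    - apply cIl.
    - rewrite cIl. exact Hqj.
    - rewrite cIl. exact Hh2. }
  split; [apply (ms_Fib_retract C M _ _ _ _ p q R Hq1) | apply (ms_W_retract C M _ _ _ _ p q R Hq2)].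
Qed.

Lemma pushout_sym {C : Category} {a b c p : C} (f : Hom c a) (g : Hom c b) (i1 : Hom a p) (i2 : Hom b p) :
  is_pushout f g i1 i2 -> is_pushout g f i2 i1.
Proof.
  intros [Hc Hu]. split; [symmetry; exact Hc|].
  intros q q1 q2 Hq. destruct (Hu q q2 q1 (eq_sym Hq)) as [h [H1 [H2 H3]]].
  exists h. split; [exact H2|]. split; [exact H1|]. intros h' E1 E2. apply H3; assumption.
Qed.

Lemma pushout_llp {C : Category} {a b c p : C} (f : Hom c a) (g : Hom c b) (i1 : Hom a p) (i2 : Hom b p)
  {x y : C} (q : Hom x y) :
  is_pushout f g i1 i2 -> has_LLP f q -> has_LLP i2 q.
Proof.
  intros [Hc Hu] Hf u v Hsq.
  destruct (Hf (comp u g) (comp v i1)) as [h [Hh1 Hh2]].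
  { rewrite cA, Hsq, <- cA, <- Hc, cA. reflexivity. }
  destruct (Hu x h u Hh1) as [m [Hm1 [Hm2 Hm3]]].
  exists m. split; [exact Hm2|].
  destruct (Hu y (comp v i1) (comp v i2)) as [n [Hn1 [Hn2 Hn3]]].
  { rewrite <- !cA, Hc. reflexivity. }
  rewrite (Hn3 (comp q m)), (Hn3 v); try reflexivity.
  - rewrite <- cA, Hm1. exact Hh2.
  - rewrite <- cA, Hm2. exact Hsq.
Qed.

Lemma pullback_rlp {C : Category} {a b c p : C} (f : Hom a c) (g : Hom b c) (p1 : Hom p a) (p2 : Hom p b)
  {x y : C} (i : Hom x y) :
  is_pullback f g p1 p2 -> has_LLP i g -> has_LLP i p1.
Proof.
  intros [Hc Hu] Hg u v Hsq.
  destruct (Hg (comp p2 u) (comp f v)) as [h [Hh1 Hh2]].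
  { rewrite cA, <- Hc, <- cA, Hsq, cA. reflexivity. }
  destruct (Hu y v h (eq_sym Hh2)) as [m [Hm1 [Hm2 Hm3]]].
  exists m. split; [|exact Hm1].
  destruct (Hu x (comp p1 u) (comp p2 u)) as [n [Hn1 [Hn2 Hn3]]].
  { rewrite !cA, Hc. reflexivity. }
  rewrite (Hn3 (comp m i)), (Hn3 u); try reflexivity.
  - rewrite cA, Hm1. symmetry. exact Hsq.
  - rewrite cA, Hm2. exact Hh1.
Qed.

Lemma pushout_acof {C} (M : ModelStructure C) {a b c p : C} (f : Hom c a) (g : Hom c b) (i1 : Hom a p) (i2 : Hom b p) :
  is_pushout f g i1 i2 -> Cof M f -> W M f -> Cof M i2 /\ W M i2.
Proof.
  intros Hpo Hf1 Hf2. apply llp_acof. intros x y q Hq.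
  apply (pushout_llp f g i1 i2 q Hpo). apply (ms_lift_acof C M); assumption.
Qed.

Lemma unat {C D : Category} {L : Functor C D} {U : Functor D C} (A : Adjunction L U) {X X' : C} (f : Hom X X') :
  comp (adj_unit A X') f = comp (fmap U (fmap L f)) (adj_unit A X).
Proof. apply adj_unit_nat. Qed.
Lemma cnat {C D : Category} {L : Functor C D} {U : Functor D C} (A : Adjunction L U) {Y Y' : D} (g : Hom Y Y') :
  comp g (adj_counit A Y) = comp (adj_counit A Y') (fmap L (fmap U g)).
Proof. apply adj_counit_nat. Qed.
Lemma triL {C D : Category} {L : Functor C D} {U : Functor D C} (A : Adjunction L U) (X : C) :
  comp (adj_counit A (L X)) (fmap L (adj_unit A X)) = idm (L X).
Proof. apply adj_triangle_L. Qed.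
Lemma triU {C D : Category} {L : Functor C D} {U : Functor D C} (A : Adjunction L U) (Y : D) :
  comp (fmap U (adj_counit A Y)) (adj_unit A (U Y)) = idm (U Y).
Proof. apply adj_triangle_U. Qed.

Lemma adj_lift1 {C D : Category} {L : Functor C D} {U : Functor D C} (A : Adjunction L U)
  {a b : C} (i : Hom a b) {x y : D} (p : Hom x y) :
  has_LLP (fmap L i) p -> has_LLP i (fmap U p).
Proof.
  intros H u v Hsq.
  destruct (H (comp (adj_counit A x) (fmap L u)) (comp (adj_counit A y) (fmap L v))) as [h [H1 H2]].
  { rewrite cA, cnat, <- cA, <- fC, Hsq, fC, cA. reflexivity. }
  exists (comp (fmap U h) (adj_unit A b)). split.
  - rewrite <- cA, unat, cA, <- fC, H1, fC, <- cA, <- unat, cA, triU, cIl. reflexivity.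
  - rewrite cA, <- fC, H2, fC, <- cA, <- unat, cA, triU, cIl. reflexivity.
Qed.

Lemma adj_lift2 {C D : Category} {L : Functor C D} {U : Functor D C} (A : Adjunction L U)
  {a b : C} (i : Hom a b) {x y : D} (p : Hom x y) :
  has_LLP i (fmap U p) -> has_LLP (fmap L i) p.
Proof.
  intros H u v Hsq.
  destruct (H (comp (fmap U u) (adj_unit A a)) (comp (fmap U v) (adj_unit A b))) as [h [H1 H2]].
  { rewrite cA, <- fC, Hsq, fC, <- cA, <- cA, unat. reflexivity. }
  exists (comp (adj_counit A x) (fmap L h)). split.
  - rewrite <- cA, <- fC, H1, fC, cA, <- cnat, <- cA, triL, cIr. reflexivity.
  - rewrite cA, cnat, <- cA, <- fC, H2, fC, cA, <- cnat, <- cA, triL, cIr. reflexivity.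
Qed.

Lemma U_terminal {C D : Category} {L : Functor C D} {U : Functor D C} (A : Adjunction L U)
  (t : D) : is_terminal t -> is_terminal (U t).
Proof.
  intros Ht X. destruct (Ht (L X)) as [f Hf].
  exists (comp (fmap U f) (adj_unit A X)). intros g.
  rewrite <- (Hf (comp (adj_counit A t) (fmap L g))).
  rewrite fC, <- cA, <- unat, cA, triU, cIl. reflexivity.
Qed.

Lemma pb_ext {C : Category} {a b c p : C} (f : Hom a c) (g : Hom b c) (p1 : Hom p a) (p2 : Hom p b) :
  is_pullback f g p1 p2 -> forall z (h1 h2 : Hom z p), comp p1 h1 = comp p1 h2 -> comp p2 h1 = comp p2 h2 -> h1 = h2.
Proof.
  intros [Hc Hu] z h1 h2 E1 E2.
  destruct (Hu z (comp p1 h1) (comp p2 h1)) as [h [_ [_ H3]]].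
  { rewrite !cA, Hc. reflexivity. }
  rewrite (H3 h1), (H3 h2); try reflexivity; symmetry; assumption.
Qed.

Lemma K_lemma {D} (N : ModelStructure D) {P Q : D} (k : Hom P Q) :
  (forall E F (p : Hom E F), Fib N p -> fibrant N E -> fibrant N F -> has_LLP k p) -> W N k.
Proof.
  intros HK.
  destruct (ms_limits D N) as [[t Ht] Hpb].
  destruct (ms_colimits D N) as [_ Hpo].
  assert (Tf : fibrant N t) by (apply (fibrant_of N t t Ht (idm t)); apply Fid).
  destruct (Ht P) as [tP _].
  destruct (ms_fact_acof_fib D N P t tP) as [P' [a [pa [Ha1 [Ha2 [Hpa _]]]]]].
  assert (P'f : fibrant N P') by (apply (fibrant_of N P' t Ht pa Hpa)).
  destruct (Hpo P' Q P a k) as [Q' [k' [b Hpush]]].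
  destruct (pushout_acof N a k k' b Hpush Ha1 Ha2) as [Hb1 Hb2].
  assert (HK' : forall E F (p : Hom E F), Fib N p -> fibrant N E -> fibrant N F -> has_LLP k' p).
  { intros E F p H1 H2 H3. apply (pushout_llp k a b k' p (pushout_sym _ _ _ _ Hpush)). apply HK; assumption. }
  destruct (Ht Q') as [tQ' _].
  destruct (ms_fact_acof_fib D N Q' t tQ') as [Q2 [e [pQ [He1 [He2 [HpQ _]]]]]].
  assert (Q2f : fibrant N Q2) by (apply (fibrant_of N Q2 t Ht pQ HpQ)).
  destruct (HK' _ _ pa Hpa P'f Tf (idm P') tQ') as [r [Hr _]].
  { apply (term_uniq t Ht). }
  destruct (Hpb Q2 Q2 t pQ pQ) as [Pr [pr1 [pr2 Hprod]]].
  assert (pair : forall z (z1 z2 : Hom z Q2), exists h : Hom z Pr, comp pr1 h = z1 /\ comp pr2 h = z2).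
  { intros z z1 z2. destruct Hprod as [_ Hu].
    destruct (Hu z z1 z2) as [h [H1 [H2 _]]]. { apply (term_uniq t Ht). }
    exists h. split; assumption. }
  assert (Hpr1 : Fib N pr1).
  { apply rlp_fib. intros a0 b0 i Hi1 Hi2.
    apply (pullback_rlp pQ pQ pr1 pr2 i Hprod). apply (ms_lift_acof D N); assumption. }
  assert (Prf : fibrant N Pr).
  { apply (fibrant_of N Pr t Ht (comp pQ pr1)). apply Fcomp; assumption. }
  destruct (pair Q2 (idm Q2) (idm Q2)) as [dg [Hdg1 Hdg2]].
  destruct (ms_fact_acof_fib D N Q2 Pr dg) as [QI [s [pi [Hs1 [Hs2 [Hpi Hpis]]]]]].
  assert (QIf : fibrant N QI).
  { apply (fibrant_of N QI t Ht (comp (comp pQ pr1) pi)). apply Fcomp; [assumption|]. apply Fcomp; assumption. }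
  destruct (pair Q' e (comp e (comp k' r))) as [bt [Hbt1 Hbt2]].
  destruct (HK' _ _ pi Hpi QIf Prf (comp s (comp e k')) bt) as [H [HH1 HH2]].
  { apply (pb_ext pQ pQ pr1 pr2 Hprod).
    - rewrite !cA. rewrite <- (cA pr1 pi s), Hpis, Hdg1, cIl, Hbt1. reflexivity.
    - rewrite !cA. rewrite <- (cA pr2 pi s), Hpis, Hdg2, cIl, Hbt2.
      rewrite <- !cA, Hr, cIr. reflexivity. }
  assert (Wd0 : W N (comp pr1 pi)).
  { apply (Wg N _ s Hs2). rewrite <- cA, Hpis, Hdg1. apply Wid. }
  assert (Wd1 : W N (comp pr2 pi)).
  { apply (Wg N _ s Hs2). rewrite <- cA, Hpis, Hdg2. apply Wid. }
  assert (WH : W N H).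
  { apply (Wf N (comp pr1 pi) H Wd0). rewrite <- cA, HH2, Hbt1. exact He2. }
  assert (Wkr : W N (comp k' r)).
  { apply (Wf N e _ He2). rewrite <- Hbt2, <- HH2, cA. apply Wgf; assumption. }
  assert (Wk' : W N k').
  { apply (ms_W_retract D N _ _ _ _ k' (comp k' r)); [|exact Wkr].
    exists k', r, (idm Q'), (idm Q'). repeat split.
    - exact Hr.
    - apply cIl.
    - rewrite <- cA, Hr, cIr, cIl. reflexivity.
    - rewrite cIl. reflexivity. }
  destruct Hpush as [Hc _].
  apply (Wf N b k Hb2). rewrite <- Hc. apply Wgf; assumption.
Qed.

Lemma L3' {C} (M M' : ModelStructure C) (HM' : left_Bousfield_localization M' M)
  {X Z : C} (j : Hom X Z) :
  Cof M' j -> W M' j -> fibrant M' X -> fibrant M' Z -> W M j.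
Proof.
  intros Hj1 Hj2 HX HZ. destruct HM' as [HC HW].
  destruct (ms_limits C M) as [[t Ht] _].
  destruct (ms_colimits C M) as [_ Hpo].
  destruct (Ht X) as [tX _]. destruct (Ht Z) as [tZ _].
  destruct (ms_lift_acof C M' _ _ _ _ j tX Hj1 Hj2 (HX t tX Ht) (idm X) tZ) as [r [Hr _]].
  { apply (term_uniq t Ht). }
  destruct (Hpo Z Z X j j) as [Q [in0 [in1 Hpush]]].
  destruct (pushout_acof M' j j in1 in0 (pushout_sym _ _ _ _ Hpush) Hj1 Hj2) as [_ Hin0].
  destruct Hpush as [Hc Hu].
  destruct (Hu Z (idm Z) (idm Z)) as [phi [Hphi0 [Hphi1 _]]]. { reflexivity. }
  destruct (Hu Z (idm Z) (comp j r)) as [psi [Hpsi0 [Hpsi1 _]]].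
  { rewrite cIl, <- cA, Hr, cIr. reflexivity. }
  destruct (ms_fact_cof_afib C M Q Z phi) as [Cy [c [p [Hc1 [Hp1 [Hp2 Hpc]]]]]].
  assert (Wi0 : W M (comp c in0)).
  { apply (Wf M p _ Hp2). rewrite cA, Hpc, Hphi0. apply Wid. }
  assert (Wi1 : W M (comp c in1)).
  { apply (Wf M p _ Hp2). rewrite cA, Hpc, Hphi1. apply Wid. }
  assert (Wc : W M' c).
  { apply (Wg M' c in0 Hin0). apply HW. exact Wi0. }
  destruct (Ht Cy) as [tC _].
  destruct (ms_lift_acof C M' _ _ _ _ c tZ (proj2 (HC _ _ c) Hc1) Wc (HZ t tZ Ht) psi tC) as [K [HK _]].
  { apply (term_uniq t Ht). }
  assert (WK : W M K).
  { apply (Wg M K _ Wi0). rewrite cA, HK, Hpsi0. apply Wid. }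
  assert (Wjr : W M (comp j r)).
  { rewrite <- Hpsi1, <- HK, <- cA. apply Wgf; assumption. }
  apply (ms_W_retract C M _ _ _ _ j (comp j r)); [|exact Wjr].
  exists j, r, (idm Z), (idm Z). repeat split.
  - exact Hr.
  - apply cIl.
  - rewrite <- cA, Hr, cIr, cIl. reflexivity.
  - rewrite cIl. reflexivity.
Qed.

Lemma L2 {C} (M M' : ModelStructure C) (HM' : left_Bousfield_localization M' M)
  {X Y : C} (q : Hom X Y) :
  Fib M q -> fibrant M' X -> fibrant M' Y -> Fib M' q.
Proof.
  intros Hq HX HY.
  destruct (ms_fact_acof_fib C M' X Y q) as [Z [j [q' [Hj1 [Hj2 [Hq' Hqj]]]]]].
  destruct (ms_limits C M) as [[t Ht] _].
  destruct (Ht Y) as [tY _].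
  assert (HZ : fibrant M' Z).
  { apply (fibrant_of M' Z t Ht (comp tY q')). apply Fcomp; [assumption|]. apply (HY t tY Ht). }
  assert (WMj : W M j) by (apply (L3' M M' HM' j); assumption).
  destruct HM' as [HC HW].
  destruct (ms_lift_acof C M _ _ _ _ j q (proj1 (HC _ _ j) Hj1) WMj Hq (idm X) q') as [r [Hr1 Hr2]].
  { rewrite cIr. symmetry. exact Hqj. }
  apply (ms_Fib_retract C M' _ _ _ _ q q'); [|exact Hq'].
  exists j, r, (idm Y), (idm Y). repeat split.
  - exact Hr1.
  - apply cIl.
  - rewrite cIl. exact Hqj.
  - rewrite cIl. exact Hr2.
Qed.

Lemma L3 {C} (M M' : ModelStructure C) (HM' : left_Bousfield_localization M' M)
  {X Y : C} (w : Hom X Y) :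
  W M' w -> fibrant M' X -> fibrant M' Y -> W M w.
Proof.
  intros Hw HX HY.
  destruct (ms_fact_acof_fib C M' X Y w) as [Z [j [q [Hj1 [Hj2 [Hq Hqj]]]]]].
  destruct (ms_limits C M) as [[t Ht] _].
  destruct (Ht Y) as [tY _].
  assert (HZ : fibrant M' Z).
  { apply (fibrant_of M' Z t Ht (comp tY q)). apply Fcomp; [assumption|]. apply (HY t tY Ht). }
  assert (WMj : W M j) by (apply (L3' M M' HM' j); assumption).
  assert (Wq : W M' q) by (apply (Wg M' q j Hj2); rewrite Hqj; exact Hw).
  destruct HM' as [HC HW].
  assert (Hq2 : Fib M q /\ W M q).
  { apply rlp_afib. intros a b i Hi. apply (ms_lift_afib C M'); try assumption. apply HC; exact Hi. }
  rewrite <- Hqj. apply Wgf; [assumption | apply Hq2].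
Qed.

Theorem mainTheorem2 (C D : Category) (M : ModelStructure C) (N : ModelStructure D)
  (L : Functor C D) (U : Functor D C) (A : Adjunction L U)
  (HQ : QuillenPair M N L U A)
  (Hcreate : forall (a b : D) (f : Hom a b), W N f <-> W M (fmap U f))
  (Hunit : forall X : C, cofibrant M X ->
      (exists Y : D, weakly_equivalent M X (U Y)) -> W M (adj_unit A X))
  (M' : ModelStructure C)
  (HM' : left_Bousfield_localization M' M)
  (Hfib : forall X : C, fibrant M' X <->
      (fibrant M X /\ exists Y : D, weakly_equivalent M X (U Y))) :
  QuillenEquivalence M' N L U A.
Proof.
  destruct HQ as [HQc HQw].
  pose proof HM' as [HC HW].
  assert (Ufib : forall x y (p : Hom x y), Fib N p -> Fib M (fmap U p)).
  { intros x y p Hp. apply rlp_fib. intros a b i Hi1 Hi2. apply (adj_lift1 A).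
    apply (ms_lift_acof D N); [apply HQc | apply HQw | ]; assumption. }
  destruct (ms_limits D N) as [[tD HtD] _].
  destruct (ms_limits C M) as [[tC HtC] _].
  assert (UF : forall Y, fibrant N Y -> fibrant M' (U Y)).
  { intros Y HY. apply Hfib. split.
    - destruct (HtD Y) as [tY _].
      apply (fibrant_of M (U Y) (U tD) (U_terminal A tD HtD) (fmap U tY)).
      apply Ufib. apply (HY tD tY HtD).
    - exists Y. apply rst_refl. }
  assert (G1 : forall a b (i : Hom a b), Cof M' i -> W M' i -> W N (fmap L i)).
  { intros a b i Hi1 Hi2. apply K_lemma. intros E F p Hp HE HF.
    apply (adj_lift2 A). apply (ms_lift_acof C M'); try assumption.
    apply (L2 M M' HM'); [apply Ufib; exact Hp | apply UF; exact HE | apply UF; exact HF]. }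
  split.
  { split.
    - intros a b f Hf. apply HQc. apply HC. exact Hf.
    - exact G1. }
  intros X Y f HX HY.
  assert (HXc : cofibrant M X).
  { intros i g Hi. apply HC. apply HX. exact Hi. }
  destruct (HtC X) as [tX _].
  destruct (ms_fact_acof_fib C M' X tC tX) as [X' [j [q [Hj1 [Hj2 [Hq _]]]]]].
  assert (HX' : fibrant M' X') by (apply (fibrant_of M' X' tC HtC q Hq)).
  assert (HX'c : cofibrant M X').
  { intros i g Hi. destruct (Hi X) as [g0 _].
    rewrite (init_uniq i Hi _ g (comp j g0)). apply Ccomp.
    - apply HXc. exact Hi.
    - apply HC. exact Hj1. }
  assert (Weta' : W M (adj_unit A X')).
  { apply Hunit; [exact HX'c|]. apply (proj1 (Hfib X') HX'). }
  assert (WLj : W N (fmap L j)) by (apply G1; assumption).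
  assert (WULj : W M (fmap U (fmap L j))) by (apply Hcreate; exact WLj).
  assert (Weta : W M' (adj_unit A X)).
  { apply (Wf M' (fmap U (fmap L j))). { apply HW. exact WULj. }
    rewrite <- unat. apply Wgf; [exact Hj2 | apply HW; exact Weta']. }
  unfold adjunct. split.
  - intros Hf. apply Wgf; [exact Weta|]. apply HW. apply Hcreate. exact Hf.
  - intros Hf.
    assert (WUf : W M' (fmap U f)) by (apply (Wg M' _ _ Weta Hf)).
    destruct (HtD Y) as [tY _].
    destruct (HtD (L X')) as [tLX' _].
    destruct (ms_lift_acof D N _ _ _ _ (fmap L j) tY (HQc _ _ j (proj1 (HC _ _ j) Hj1)) WLj (HY tD tY HtD) f tLX')
      as [g [Hg _]].
    { apply (term_uniq tD HtD). }
    assert (WUg : W M' (fmap U g)).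
    { apply (Wg M' _ (fmap U (fmap L j))). { apply HW. exact WULj. }
      rewrite <- fC, Hg. exact WUf. }
    assert (Wadj : W M (comp (fmap U g) (adj_unit A X'))).
    { apply (L3 M M' HM'); [ | exact HX' | apply UF; exact HY].
      apply Wgf; [apply HW; exact Weta' | exact WUg]. }
    assert (WNg : W N g).
    { apply Hcreate. apply (Wg M _ _ Weta' Wadj). }
    rewrite <- Hg. apply Wgf; assumption.
Qed.
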